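(* Let $k\ge3$, $1\le s\le k$, $r\le\min\{n_1,\dots,n_s\}$, $\mathcal A\in\mathbb R^{n_1}\otimes\cdots\otimes\mathbb R^{n_k}$ nonzero, and let $\{U_{[p]}\}$ be generated by the iAPD-ALS algorithm (described in the context) with proximal parameter $\epsilon>0$ and truncation parameter $\kappa$. If the $p$-th iteration is not a truncation iteration, then $$f(U_{[p]})-f(U_{[p-1]})\ge\frac{\min\{\epsilon,2\kappa^2\}}{2}\,\|U_{[p]}-U_{[p-1]}\|_F^2 .$$
   Context: Notation. $\mathrm V(m,n)=\{U\in\mathbb R^{n\times m}:U^{\mathsf T}U=I_m\}$; $\mathrm B(m,n)$: $n\times m$ real matrices with unit columns. $\mathcal A\tau(\mathbf u_1,\dots,\mathbf u_k)=\langle\mathcal A,\mathbf u_1\otimes\cdots\otimes\mathbf u_k\rangle$; $\mathcal A\tau_i(\mathbf u_1,\dots,\mathbf u_k)\in\mathbb R^{n_i}$ is the contraction of $\mathcal A$ with all $\mathbf u_l$, $l\ne i$. For $U=(U^{(1)},\dots,U^{(k)})$ with columns $\mathbf u^{(i)}_j$, $j\le t$: $f(U)=\sum_j\mathcal A\tau(\mathbf u^{(1)}_j,\dots,\mathbf u^{(k)}_j)^2$, $\|U\|_F^2=\sum_i\|U^{(i)}\|_F^2$. $\operatorname{Polar}(X)$ is the set of $Q\in\mathrm V(m,n)$ maximizing $\langle Q,X\rangle$. iAPD-ALS algorithm. Choose $U_{[0]}\in\mathrm V(r,n_1)\times\cdots\times\mathrm V(r,n_s)\times\mathrm B(r,n_{s+1})\times\cdots\times\mathrm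 B(r,n_k)$ with $f(U_{[0]})>0$ and $\kappa\in(0,\sqrt{f(U_{[0]})/r})$. For $p=1,2,\dots$ ($t$ = current number of columns, $\mathbf u^{(i)}_{j,[q]}$ = $j$-th column of $U^{(i)}_{[q]}$), let $\mathbf x^i_{j,[p]}=(\mathbf u^{(1)}_{j,[p]},\dots,\mathbf u^{(i-1)}_{j,[p]},\mathbf u^{(i)}_{j,[p-1]},\dots,\mathbf u^{(k)}_{j,[p-1]})$, $\lambda^{i-1}_{j,[p]}=\mathcal A\tau(\mathbf x^i_{j,[p]})$, $\Lambda^{(i)}_{[p]}=\operatorname{diag}(\lambda^{i-1}_{j,[p]})_j$, $V^{(i)}_{[p]}=[\mathcal A\tau_i(\mathbf x^i_{j,[p]})]_j$. (1) For $i=1,\dots,s$ in turn pick $U^{(i)}_{[p]}\in\operatorname{Polar}(V^{(i)}_{[p]}\Lambda^{(i)}_{[p]})$, and if the smallest eigenvalue of $(U^{(i)}_{[p]})^{\mathsf T}V^{(i)}_{[p]}\Lambda^{(i)}_{[p]}$ is $<\epsilon$, instead pick $U^{(i)}_{[p]}\in\operatorname{Polar}(V^{(i)}_{[p]}\Lambda^{(i)}_{[p]}+\epsilon U^{(i)}_{[p-1]})$. (2) Truncation: with $J=\{j:|((U^{(s)}_{[p]})^{\mathsf T}V^{(s)}_{[p]})_{jj}|<\kappa\}$, if $J\neq\emptyset$ (a truncation iteration) delete columns in $J$ from $U^{(1)}_{[p]},\dots,U^{(s)}_{[p]}$ and $U^{(s+1)}_{[p-1]},\dots,U^{(k)}_{[p-1]}$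 and set $t:=t-|J|$. (3) For $i=s+1,\dots,k$ in turn, $\mathbf u^{(i)}_{j,[p]}=\operatorname{sgn}(\lambda^{i-1}_{j,[p]})\mathcal A\tau_i(\mathbf x^i_{j,[p]})/\|\mathcal A\tau_i(\mathbf x^i_{j,[p]})\|$. Set $U_{[p]}=(U^{(1)}_{[p]},\dots,U^{(k)}_{[p]})$ and iterate indefinitely. *)

(* Defs.v *)
From HB Require Import structures.
From mathcomp Require Import all_boot all_order all_algebra.
From mathcomp Require Import reals.
Set Implicit Arguments. Unset Strict Implicit. Unset Printing Implicit Defensive.
Import Order.TTheory GRing.Theory Num.Theory.
Local Open Scope ring_scope.

Section IAPD.
Variable R : realType.
Variable k : nat.
Variable n : 'I_k -> nat.

Definition idx := {dffun forall i : 'I_k, 'I_(n i)}.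
Definition tensor := idx -> R.
Definition vecs := forall l : 'I_k, 'cV[R]_(n l).

(* A tau (u_1,...,u_k) = <A, u_1 (x) ... (x) u_k> *)
Definition contr (A : tensor) (u : vecs) : R :=
  \sum_(iota : idx) A iota * \prod_(l < k) u l (iota l) 0.

Definition contr_i (A : tensor) (i : 'I_k) (u : vecs) : 'cV[R]_(n i) :=
  \col_(a < n i) \sum_(iota : idx | iota i == a)
                    A iota * \prod_(l < k | l != i) u l (iota l) 0.

Definition factors (t : nat) := forall i : 'I_k, 'M[R]_(n i, t).

Definition colvecs t (U : factors t) (j : 'I_t) : vecs := fun l => col j (U l).

Definition fobj (A : tensor) t (U : factors t) : R :=
  \sum_(j < t) (contr A (colvecs U j)) ^+ 2.

Definition frob2 t (U : factors t) : R :=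
  \sum_(i < k) \sum_(a < n i) \sum_(j < t) (U i a j) ^+ 2.

(* U in V(t,n_1) x ... x V(t,n_s) x B(t,n_{s+1}) x ... x B(t,n_k);
   mode i (0-based) is orthonormal iff i < s (i.e. paper's i+1 <= s) *)
Definition feasible (s : nat) t (U : factors t) : Prop :=
  (forall i : 'I_k, (i < s)%N -> (U i)^T *m U i = 1%:M) /\
  (forall i : 'I_k, (s <= i)%N -> forall j : 'I_t, \sum_(a < n i) (U i a j) ^+ 2 = 1).

Definition mxdot m t (X Y : 'M[R]_(m, t)) : R := \sum_(a < m) \sum_(j < t) X a j * Y a j.

Definition Polar m t (X Q : 'M[R]_(m, t)) : Prop :=
  Q^T *m Q = 1%:M /\
  forall Q' : 'M[R]_(m, t), Q'^T *m Q' = 1%:M -> mxdot Q' X <= mxdot Q X.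

Definition mix t (i : 'I_k) (Unew Uold : factors t) (j : 'I_t) : vecs :=
  fun l => col j (if (l < i)%N then Unew l else Uold l).

Definition Vmat (A : tensor) t (i : 'I_k) (Unew Uold : factors t) : 'M[R]_(n i, t) :=
  \matrix_(a < n i, j < t) contr_i A i (mix i Unew Uold j) a 0.

Definition Lam (A : tensor) t (i : 'I_k) (Unew Uold : factors t) : 'M[R]_t :=
  diag_mx (\row_(j < t) contr A (mix i Unew Uold j)).

Definition polar_phase (A : tensor) (s : nat) (eps : R) t (Uold Unew : factors t) : Prop :=
  forall i : 'I_k, (i < s)%N ->
    let X := Vmat A i Unew Uold *m Lam A i Unew Uold in
    exists W : 'M[R]_(n i, t), Polar X W /\
      ((exists a : R, eigenvalue (W^T *m X) a /\ a < eps) ->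
          Polar (X + eps *: Uold i) (Unew i)) /\
      (~ (exists a : R, eigenvalue (W^T *m X) a /\ a < eps) -> Unew i = W).

(* j \in J : |((U^(s)_[p])^T V^(s)_[p])_jj| < kappa  (mode s is the 0-based index i with i.+1 = s) *)
Definition in_trunc (A : tensor) (s : nat) (kappa : R) t (Uold Unew : factors t) (j : 'I_t) : Prop :=
  forall i : 'I_k, i.+1 = s -> `|((Unew i)^T *m Vmat A i Unew Uold) j j| < kappa.

(* step (3): ALS normalized updates of the modes s+1..k, after the column deletion
   given by the increasing enumeration g of the kept columns *)
Definition als_phase (A : tensor) (s : nat) t t' (g : 'I_t' -> 'I_t)
    (Uold Unew : factors t) (Unext : factors t') : Prop :=
  let T : factors t' := fun l => mxsub id g (if (l < s)%N then Unew l else Uold l) in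
  (forall l : 'I_k, (l < s)%N -> Unext l = T l) /\
  (forall i : 'I_k, (s <= i)%N -> forall j : 'I_t',
     let x := mix i Unext T j in
     col j (Unext i) =
       (Num.sg (contr A x) * (Num.sqrt (\sum_(a < n i) (contr_i A i x a 0) ^+ 2))^-1)
         *: contr_i A i x).

(* one iteration U_[p-1] = Uold  |->  U_[p] = Unext of iAPD-ALS;
   trunc = true iff it is a truncation iteration (J <> empty) *)
Definition iapd_step (trunc : bool) (A : tensor) (s : nat) (eps kappa : R)
    t t' (Uold : factors t) (Unext : factors t') : Prop :=
  exists Unew : factors t,
    polar_phase A s eps Uold Unew /\
    exists g : 'I_t' -> 'I_t,
      (forall a b : 'I_t', (a < b)%N = (g a < g b)%N) /\
      (forall j : 'I_t, (exists j', g j' = j) <-> ~ in_trunc A s kappa Uold Unew j) /\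
      (trunc = true <-> exists j, in_trunc A s kappa Uold Unew j) /\
      als_phase A s g Uold Unew Unext.

End IAPD.

(* Main.v *)
Require Import Defs.
From HB Require Import structures.
From mathcomp Require Import all_boot all_order all_algebra.
From mathcomp Require Import reals.
From mathcomp Require Import ring lra zify.
From mathcomp.real_closed Require Import complex.
From Stdlib Require Import Classical FunctionalExtensionality.
Set Implicit Arguments. Unset Strict Implicit. Unset Printing Implicit Defensive.
Import Order.TTheory GRing.Theory Num.Theory Num.Def.
Local Open Scope ring_scope.

Section G2c.
Variable R : rcfType.
Local Notation C := (R[i]).
Local Notation f := (@real_complex R).

Lemma realC (x : R) : (f x : C) \is Num.real.
Proof. by apply/complex_realP; exists x. Qed.

Lemma conjf (x : R) : conjC (f x : C) = f x.
Proof. by rewrite conj_Creal // realC. Qed.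

Lemma eigen_map t (H : 'M[R]_t) (a : R) : eigenvalue (map_mx f H) (f a) -> eigenvalue H a.
Proof.
by rewrite !eigenvalue_root_char -map_char_poly fmorph_root.
Qed.

Lemma psd_of_eig t (H : 'M[R]_t) (e : R) : H^T = H ->
  (forall a, eigenvalue H a -> e <= a) ->
  forall y : 'rV_t, e * (y *m y^T) 0 0 <= (y *m H *m y^T) 0 0.
Proof.
move=> Hsym Heig y.
set Hc := map_mx f H.
have herm : Hc \is hermsymmx.
  apply: realsym_hermsym.
    apply/is_hermitianmxP; rewrite expr0 scale1r map_mx_id // /Hc map_trmx Hsym //.
  by apply/mxOverP => i j; rewrite mxE realC.
have /orthomx_spectralP Hdec := hermitian_normalmx herm.
set P := spectralmx Hc in Hdec.
set d := spectral_diag Hc in Hdec.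
have Pu : P \is unitarymx := spectral_unitarymx Hc.
have Punit : P \in unitmx := spectral_unit Hc.
have dreal := hermitian_spectral_diag_real herm.
have PPs : P *m map_mx conjC P^T = 1%:M by apply/unitarymxP.
have PsP : map_mx conjC P^T *m P = 1%:M by rewrite -invmx_unitary // mulVmx.
rewrite invmx_unitary // in Hdec.
have dge : forall i, f e <= d 0 i.
  move=> i.
  have : eigenvalue Hc (d 0 i).
    apply/eigenvalueP; exists (row i P).
      have -> : row i P *m Hc = row i (P *m Hc) by rewrite row_mul.
      rewrite Hdec !mulmxA PPs mul1mx mul_diag_mx.
      by apply/rowP => j; rewrite !mxE.
    apply/eqP => /rowP P0.
    move/matrixP: PPs => /(_ i i); rewrite !mxE eqxx /= big1 ?oner_eq0 //.
      by move/esym/eqP; rewrite oner_eq0.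
    by move=> j _; have := P0 j; rewrite !mxE => ->; rewrite mul0r.
  have /mxOverP /(_ 0 i) /complex_realP [r ->] := dreal.
  move=> /eigen_map /Heig; by rewrite lecR.
set yc := map_mx f y.
set z := yc *m map_mx conjC P^T.
have wE : P *m yc^T = map_mx conjC z^T.
  apply/matrixP => i j; rewrite !mxE rmorph_sum /=.
  by apply: eq_bigr => l _; rewrite !mxE rmorphM /= conjCK conjf mulrC.
have zE : yc *m map_mx conjC P^T = z by [].
clearbody z.
have q1 : f ((y *m H *m y^T) 0 0) = \sum_i d 0 i * (z 0 i * conjC (z 0 i)).
  have -> : f ((y *m H *m y^T) 0 0) = (yc *m Hc *m yc^T) 0 0.
    by rewrite /yc /Hc map_trmx -!map_mxM [in RHS]mxE.
  rewrite Hdec !mulmxA zE -!mulmxA wE mul_diag_mx mxE.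
  by apply: eq_bigr => i _; rewrite !mxE mulrCA.
have q2 : f ((y *m y^T) 0 0) = \sum_i (z 0 i * conjC (z 0 i)).
  have -> : f ((y *m y^T) 0 0) = (yc *m yc^T) 0 0.
    by rewrite /yc /Hc map_trmx -!map_mxM [in RHS]mxE.
  rewrite -{1}[yc]mulmx1 -PsP mulmxA zE -mulmxA wE mxE.
  by apply: eq_bigr => i _; rewrite !mxE.
rewrite -lecR rmorphM /= q1 q2 mulr_sumr.
apply: ler_sum => i _; apply: ler_wpM2r => //; exact: mul_conjC_ge0.
Qed.
End G2c.

Section G1.
Variable R : realType.

Lemma sum_split2 m (a b : 'I_m) (F : 'I_m -> R) : a != b ->
  \sum_k F k = F a + F b + \sum_(k | (k != a) && (k != b)) F k.
Proof.
move=> ab; rewrite (bigD1 a) //= (bigD1 b) /=; last by rewrite eq_sym.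
rewrite addrA; congr (_ + _); apply: eq_bigl => k; by rewrite andbC.
Qed.

Lemma lin_quad (S D : R) : (forall u : R, - (u ^+ 2 * S) + u * D <= 0) -> D = 0.
Proof.
move=> H; have := H (D / (`|S| + 1)).
have h1 : 0 < `|S| + 1 by rewrite ltr_pwDr // normr_ge0.
set v := `|S| + 1 in h1 *.
have hS : S <= `|S| := ler_norm S.
move=> h2; apply/eqP; rewrite -sqrf_eq0 eq_le sqr_ge0 andbT.
have : D ^+ 2 * (v - S) <= 0.
  have := h2; rewrite expr_div_n.
  have -> : - (D ^+ 2 / v ^+ 2 * S) + D / v * D = D ^+ 2 * (v - S) / v ^+ 2.
    by field; rewrite gt_eqF.
  by rewrite pmulr_lle0 // invr_gt0 exprn_gt0.
have : 1 <= v - S by rewrite /v; lra.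
nra.
Qed.

Definition rot m t (a b : 'I_m) (c s : R) (W : 'M[R]_(m, t)) : 'M[R]_(m, t) :=
  \matrix_(k, j) (if k == a then c * W a j + s * W b j
                  else if k == b then c * W b j - s * W a j else W k j).

Lemma rot_orth m t (a b : 'I_m) c s (W : 'M[R]_(m, t)) : a != b -> c ^+ 2 + s ^+ 2 = 1 ->
  (rot a b c s W)^T *m rot a b c s W = W^T *m W.
Proof.
move=> ab cs; have ba : (b == a) = false by rewrite eq_sym (negbTE ab).
apply/matrixP => i j; rewrite !mxE (sum_split2 _ ab) [RHS](sum_split2 _ ab).
have -> : \sum_(k | (k != a) && (k != b)) (rot a b c s W)^T i k * rot a b c s W k j =
   \sum_(k | (k != a) && (k != b)) W^T i k * W k j.
  apply: eq_bigr => k /andP[ka kb]; by rewrite !mxE (negbTE ka) (negbTE kb).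
congr (_ + _); rewrite !mxE eqxx ba eqxx.
set x := W a i; set y := W b i; set z := W a j; set w := W b j.
transitivity ((c ^+ 2 + s ^+ 2) * (x * z + y * w)); first by ring.
by rewrite cs mul1r.
Qed.

Lemma mxdot_rot m t (a b : 'I_m) c s (W X : 'M[R]_(m, t)) : a != b ->
  mxdot (rot a b c s W) X = mxdot W X +
    (c - 1) * \sum_j (W a j * X a j + W b j * X b j) +
    s * \sum_j (W b j * X a j - W a j * X b j).
Proof.
move=> ab; rewrite /mxdot (sum_split2 _ ab) [in RHS](sum_split2 _ ab).
have -> : \sum_(k | (k != a) && (k != b)) \sum_j rot a b c s W k j * X k j =
   \sum_(k | (k != a) && (k != b)) \sum_j W k j * X k j.
  apply: eq_bigr => k /andP[ka kb]; apply: eq_bigr => j _.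
  by rewrite !mxE (negbTE ka) (negbTE kb).
set S := \sum_(k | _) _.
suff -> : \sum_j rot a b c s W a j * X a j + \sum_j rot a b c s W b j * X b j =
   \sum_j W a j * X a j + \sum_j W b j * X b j +
    (c - 1) * \sum_j (W a j * X a j + W b j * X b j) +
    s * \sum_j (W b j * X a j - W a j * X b j) by ring.
have ba : (b == a) = false by rewrite eq_sym (negbTE ab).
rewrite !mulr_sumr -!big_split /=; apply: eq_bigr => j _.
rewrite !mxE eqxx ba eqxx; ring.
Qed.

Lemma polar_sym m t (X W : 'M[R]_(m, t)) : Polar X W ->
  forall a b, (X *m W^T) a b = (X *m W^T) b a.
Proof.
move=> [WW Wmax] a b.
have [->|ab] := eqVneq a b; first by [].
have key : \sum_j (W b j * X a j - W a j * X b j) = 0.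
  apply: (@lin_quad (\sum_j (W a j * X a j + W b j * X b j)) ) => u.
  have hu : 0 < 1 + u ^+ 2 by rewrite ltr_pwDl ?sqr_ge0.
  set c := (1 - u ^+ 2) / (1 + u ^+ 2).
  set s := 2 * u / (1 + u ^+ 2).
  have cs : c ^+ 2 + s ^+ 2 = 1.
    by rewrite /c /s; field; rewrite gt_eqF.
  have := Wmax _ (etrans (rot_orth W ab cs) WW).
  rewrite mxdot_rot //.
  set S1 := \sum_j _; set S2 := \sum_j _ => h.
  have h' : (c - 1) * S1 + s * S2 <= 0 by lra.
  have e : (1 + u ^+ 2) * ((c - 1) * S1 + s * S2) = 2 * (- (u ^+ 2 * S1) + u * S2).
    by rewrite /c /s; field; rewrite gt_eqF.
  have : (1 + u ^+ 2) * ((c - 1) * S1 + s * S2) <= 0 by rewrite pmulr_rle0.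
  rewrite e; nra.
rewrite !mxE; move/eqP: key; rewrite sumrB subr_eq0 => /eqP key.
rewrite (eq_bigr (fun j => W b j * X a j)); last by move=> j _; rewrite !mxE mulrC.
rewrite key; apply: eq_bigr => j _; by rewrite !mxE mulrC.
Qed.

Lemma mxdot_tr m t (A B : 'M[R]_(m, t)) : mxdot A B = \tr (A^T *m B).
Proof.
rewrite /mxdot /mxtrace exchange_big /=; apply: eq_bigr => j _.
rewrite !mxE; apply: eq_bigr => a _; by rewrite !mxE.
Qed.

Lemma polar_nonprox (e : R) m t (X W U : 'M[R]_(m, t)) : Polar X W ->
  ~ (exists a, eigenvalue (W^T *m X) a /\ a < e) -> U^T *m U = 1%:M ->
  e / 2 * \sum_(a < m) \sum_(j < t) (W a j - U a j) ^+ 2 <= mxdot (W - U) X.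
Proof.
move=> WP Heig UU.
have Ysym : (X *m W^T)^T = X *m W^T.
  by apply/matrixP => a b; rewrite mxE (polar_sym WP).
have WW := WP.1.
set H := W^T *m X.
have XE : X = W *m H^T.
  rewrite /H trmx_mul trmxK -{1}[X]mulmx1 -WW mulmxA -Ysym trmx_mul trmxK.
  by rewrite mulmxA.
have Hsym : H^T = H by rewrite {2}/H XE mulmxA WW mul1mx.
have {}XE : X = W *m H by rewrite {1}XE Hsym.
have psd := @psd_of_eig R t H e Hsym.
have {}psd : forall y : 'rV_t, e * (y *m y^T) 0 0 <= (y *m H *m y^T) 0 0.
  apply: psd => a ea; rewrite leNgt; apply/negP => ae; apply: Heig; by exists a.
set D := W - U.
have twice : 2 * mxdot D X = \tr (D^T *m D *m H).
  set K := W^T *m U - U^T *m W.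
  have KE : D^T *m D = 2%:R *: (D^T *m W) - K.
    rewrite /K /D [(W - U)^T]linearB /= !mulmxBl !mulmxBr WW UU.
    apply/matrixP => a b; rewrite !mxE; ring.
  have trK : \tr (K *m H) = 0.
    have : \tr (K *m H) = - \tr (K *m H).
      rewrite -[in LHS]mxtrace_tr trmx_mul Hsym.
      have -> : K^T = - K by rewrite /K linearB /= !trmx_mul !trmxK opprB.
      by rewrite mulmxN linearN /= mxtrace_mulC.
    move=> h; lra.
  rewrite KE mulmxBl linearB /= trK subr0 -scalemxAl mxtraceZ mxdot_tr XE mulmxA.
  by rewrite mulr_natl.
have trE : \tr (D^T *m D *m H) = \sum_a (row a D *m H *m (row a D)^T) 0 0.
  rewrite -mulmxA mxtrace_mulC /mxtrace; apply: eq_bigr => a _.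
  rewrite !mxE; apply: eq_bigr => l _; rewrite !mxE; congr (_ * _).
  by apply: eq_bigr => k _; rewrite !mxE.
have nE : \sum_(a < m) \sum_(j < t) (W a j - U a j) ^+ 2 = \sum_a (row a D *m (row a D)^T) 0 0.
  apply: eq_bigr => a _; rewrite !mxE; apply: eq_bigr => j _; by rewrite !mxE expr2.
have : e * \sum_a (row a D *m (row a D)^T) 0 0 <= \tr (D^T *m D *m H).
  rewrite trE mulr_sumr; apply: ler_sum => a _; exact: psd.
rewrite -twice nE; lra.
Qed.
End G1.


Section Main.
Variables (R : realType) (k : nat) (n : 'I_k -> nat) (A : tensor R n).

Lemma contr_dot (i : 'I_k) (u : vecs R n) :
  contr A u = \sum_(a < n i) u i a 0 * contr_i A i u a 0.
Proof.
rewrite /contr (partition_big (fun iota : idx n => iota i) predT) //=.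
apply: eq_bigr => a _; rewrite mxE mulr_sumr; apply: eq_bigr => iota /eqP ia.
by rewrite (bigD1 i) //= ia mulrCA.
Qed.

Lemma contr_i_ext (i : 'I_k) (u u' : vecs R n) :
  (forall l, l != i -> u l = u' l) -> contr_i A i u = contr_i A i u'.
Proof.
move=> h; apply/matrixP => a b; rewrite !mxE; apply: eq_bigr => iota _.
by congr (_ * _); apply: eq_bigr => l li; rewrite h.
Qed.

Definition mixn t (i : nat) (Unew Uold : factors R n t) (j : 'I_t) : vecs R n :=
  fun l => col j (if (l < i)%N then Unew l else Uold l).

Lemma mixE t (i : 'I_k) (Unew Uold : factors R n t) j : mix i Unew Uold j = mixn i Unew Uold j.
Proof. by []. Qed.

Lemma mixn_step_ne t (i : 'I_k) (Unew Uold : factors R n t) j l : l != i ->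
  mixn i.+1 Unew Uold j l = mixn i Unew Uold j l.
Proof.
move=> li; rewrite /mixn ltnS leq_eqVlt.
by have -> : (nat_of_ord l == i) = false by apply/negbTE; rewrite -(inj_eq val_inj) in li.
Qed.

Lemma contr_i_step t (i : 'I_k) (Unew Uold : factors R n t) j :
  contr_i A i (mixn i.+1 Unew Uold j) = contr_i A i (mixn i Unew Uold j).
Proof. by apply: contr_i_ext => l li; rewrite mixn_step_ne. Qed.

Definition vv t (i : 'I_k) (Unew Uold : factors R n t) (j : 'I_t) : 'cV[R]_(n i) :=
  contr_i A i (mixn i Unew Uold j).

Lemma lam_new t (i : 'I_k) (Unew Uold : factors R n t) j :
  contr A (mixn i.+1 Unew Uold j) = \sum_a Unew i a j * vv i Unew Uold j a 0.
Proof.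
rewrite (contr_dot i) /vv; apply: eq_bigr => a _.
by rewrite contr_i_step /mixn ltnSn mxE.
Qed.

Lemma lam_old t (i : 'I_k) (Unew Uold : factors R n t) j :
  contr A (mixn i Unew Uold j) = \sum_a Uold i a j * vv i Unew Uold j a 0.
Proof.
by rewrite (contr_dot i) /vv; apply: eq_bigr => a _; rewrite /mixn ltnn mxE.
Qed.

Lemma fobj_old t (U : factors R n t) (V : factors R n t) :
  fobj A U = \sum_j contr A (mixn 0 V U j) ^+ 2.
Proof. by []. Qed.

Lemma fobj_new t (U : factors R n t) (V : factors R n t) :
  fobj A U = \sum_j contr A (mixn k U V j) ^+ 2.
Proof.
apply: eq_bigr => j _; congr (_ ^+ 2); congr (contr A _).
apply: functional_extensionality_dep => l; by rewrite /mixn ltn_ord.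
Qed.

Lemma telescope t (Unew Uold : factors R n t) :
  fobj A Unew - fobj A Uold =
  \sum_(i < k) \sum_j (contr A (mixn i.+1 Unew Uold j) ^+ 2 - contr A (mixn i Unew Uold j) ^+ 2).
Proof.
rewrite (fobj_new Unew Uold) (fobj_old Uold Unew) -sumrB exchange_big /=.
apply: eq_bigr => j _.
rewrite -(big_mkord xpredT (fun i => contr A (mixn i.+1 Unew Uold j) ^+ 2 - contr A (mixn i Unew Uold j) ^+ 2)).
by rewrite telescope_sumr.
Qed.

End Main.


Section Col.
Variable R : realType.

Lemma als_col m (u v : 'I_m -> R) (kap : R) :
  \sum_a u a ^+ 2 = 1 -> 0 < kap -> kap <= `|\sum_a u a * v a| ->
  let lam := \sum_a u a * v a in
  let N := Num.sqrt (\sum_a v a ^+ 2) in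
  let w := fun a => Num.sg lam * N^-1 * v a in
  [/\ \sum_a w a ^+ 2 = 1,
      `|lam| <= `|\sum_a w a * v a| &
      kap ^+ 2 * \sum_a (w a - u a) ^+ 2 <= (\sum_a w a * v a) ^+ 2 - lam ^+ 2].
Proof.
move=> u1 kp kl lam N w.
have lamE : \sum_a u a * v a = lam by [].
rewrite lamE in kl; clearbody lam.
set S2 := \sum_a v a ^+ 2.
have e1 : \sum_a (v a - lam * u a) ^+ 2 = S2 - lam ^+ 2.
  have -> : S2 - lam ^+ 2 = S2 - 2 * lam * lam + lam ^+ 2 * \sum_a u a ^+ 2.
    by rewrite u1; ring.
  rewrite -{2}lamE /S2 !mulr_sumr mulr_suml -sumrB -big_split /=.
  apply: eq_bigr => a _; ring.
have S2l : lam ^+ 2 <= S2.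
  by rewrite -subr_ge0 -e1; apply: sumr_ge0 => a _; exact: sqr_ge0.
have S2ge0 : 0 <= S2 by apply: sumr_ge0 => a _; exact: sqr_ge0.
have NN : N ^+ 2 = S2 by rewrite sqr_sqrtr.
have N0 : 0 <= N by exact: sqrtr_ge0.
set L := `|lam|.
have L2 : L ^+ 2 = lam ^+ 2 by rewrite /L real_normK // num_real.
have Lk : kap <= L by [].
have NL : L <= N.
  rewrite -(ler_pXn2r (n:=2)) // ?nnegrE ?normr_ge0 //; by rewrite NN L2.
have Np : 0 < N by lra.
have lam0 : lam != 0 by rewrite -normr_gt0; rewrite -/L; lra.
have sg2 : Num.sg lam ^+ 2 = 1 by rewrite sqr_sg lam0.
have sgL : Num.sg lam * lam = L by rewrite /L normrEsg.
have wv : \sum_a w a * v a = Num.sg lam * N.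
  rewrite /w; have -> : Num.sg lam * N = Num.sg lam * N^-1 * S2.
    by rewrite -NN; field; rewrite gt_eqF.
  rewrite /S2 mulr_sumr; apply: eq_bigr => a _; ring.
have ww : \sum_a w a ^+ 2 = 1.
  have -> : 1 = Num.sg lam ^+ 2 * N^-1 ^+ 2 * S2 by rewrite sg2 -NN; field; rewrite gt_eqF.
  rewrite /S2 mulr_sumr; apply: eq_bigr => a _; rewrite /w; ring.
have wu : \sum_a w a * u a = L / N.
  transitivity (Num.sg lam / N * \sum_a u a * v a).
    rewrite mulr_sumr; apply: eq_bigr => a _; rewrite /w; ring.
  by rewrite lamE -sgL mulrAC.
have d2 : \sum_a (w a - u a) ^+ 2 = 2 - 2 * (L / N).
  have -> : 2 - 2 * (L / N) = \sum_a w a ^+ 2 - 2 * \sum_a w a * u a + \sum_a u a ^+ 2.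
    by rewrite ww wu u1; ring.
  rewrite mulr_sumr -sumrB -big_split /=; apply: eq_bigr => a _; ring.
split => //.
  by rewrite wv normrM normr_sg lam0 mul1r gtr0_norm.
rewrite d2 wv exprMn sg2 mul1r NN -L2 -subr_ge0.
have -> : S2 - L ^+ 2 - kap ^+ 2 * (2 - 2 * (L / N)) = (N - L) * (N ^+ 2 + N * L - 2 * kap ^+ 2) / N.
  by rewrite -NN; field; rewrite gt_eqF.
apply: divr_ge0; last lra.
apply: mulr_ge0; first lra.
nra.
Qed.
End Col.


Section Main3.
Variables (R : realType) (k : nat) (n : 'I_k -> nat) (A : tensor R n).

Definition als_eq s t' (Unext T : factors R n t') :=
  forall i : 'I_k, (s <= i)%N -> forall j : 'I_t',
     let x := mix i Unext T j in
     col j (Unext i) = (Num.sg (contr A x) * (Num.sqrt (\sum_(a < n i) (contr_i A i x a 0) ^+ 2))^-1) *: contr_i A i x.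

Lemma als_mode s kap t' (Unext T : factors R n t') :
  0 < kap ->
  (forall l : 'I_k, (s <= l)%N -> forall j, \sum_a T l a j ^+ 2 = 1) ->
  als_eq s Unext T ->
  forall i : 'I_k, (s <= i)%N -> forall j,
    kap <= `|contr A (mixn i Unext T j)| ->
    [/\ \sum_a Unext i a j ^+ 2 = 1,
        `|contr A (mixn i Unext T j)| <= `|contr A (mixn i.+1 Unext T j)| &
        kap ^+ 2 * \sum_a (Unext i a j - T i a j) ^+ 2 <=
          contr A (mixn i.+1 Unext T j) ^+ 2 - contr A (mixn i Unext T j) ^+ 2].
Proof.
move=> kp hT hals i si j hk.
have wE : forall a, Unext i a j = Num.sg (contr A (mixn i Unext T j)) *
    (Num.sqrt (\sum_a0 vv A i Unext T j a0 0 ^+ 2))^-1 * vv A i Unext T j a 0.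
  move=> a; have h := hals i si j; move/matrixP: h => /(_ a 0); rewrite !mxE => ->.
  by rewrite mixE.
have := @als_col R (n i) (fun a => T i a j) (fun a => vv A i Unext T j a 0) kap (hT i si j) kp.
rewrite -lam_old => /(_ hk) /= [h1 h2 h3].
have wv : \sum_a Num.sg (contr A (mixn i Unext T j)) /
    Num.sqrt (\sum_a0 vv A i Unext T j a0 0 ^+ 2) * vv A i Unext T j a 0 * vv A i Unext T j a 0
    = contr A (mixn i.+1 Unext T j).
  by rewrite lam_new; apply: eq_bigr => a _; rewrite wE.
split.
- by rewrite -h1; apply: eq_bigr => a _; rewrite wE.
- by rewrite -wv.
- rewrite -wv; apply: le_trans h3; rewrite le_eqVlt; apply/orP; left; apply/eqP.
  by congr (_ * _); apply: eq_bigr => a _; rewrite wE.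
Qed.

Lemma als_chain s kap t' (Unext T : factors R n t') :
  0 < kap ->
  (forall l : 'I_k, (s <= l)%N -> forall j, \sum_a T l a j ^+ 2 = 1) ->
  als_eq s Unext T ->
  (forall j, kap <= `|contr A (mixn s Unext T j)|) ->
  forall i : 'I_k, (s <= i)%N -> forall j,
    [/\ kap <= `|contr A (mixn i Unext T j)|,
        \sum_a Unext i a j ^+ 2 = 1 &
        kap ^+ 2 * \sum_a (Unext i a j - T i a j) ^+ 2 <=
          contr A (mixn i.+1 Unext T j) ^+ 2 - contr A (mixn i Unext T j) ^+ 2].
Proof.
move=> kp hT hals hbase.
have chain : forall d j (i : 'I_k), nat_of_ord i = (s + d)%N -> kap <= `|contr A (mixn i Unext T j)|.
  elim=> [|d IH] j i ie.
    by rewrite ie addn0; exact: hbase.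
  have lt : (s + d < k)%N by rewrite -ltnS -addnS -ie ltnS ltnW.
  have := IH j (Ordinal lt) erefl.
  move=> h; have [_ h2 _] := als_mode kp hT hals (leq_addr d s : (s <= Ordinal lt)%N) h.
  apply: (le_trans h); move: h2; by rewrite ie addnS.
move=> i si j.
have hk : kap <= `|contr A (mixn i Unext T j)|.
  apply: (chain (i - s)%N); by rewrite subnKC.
have [h1 _ h3] := als_mode kp hT hals si hk.
by split.
Qed.

End Main3.


Section Main4.
Variables (R : realType).

Lemma polar_prox (e : R) m t (X Q U : 'M[R]_(m, t)) : Polar (X + e *: U) Q ->
  U^T *m U = 1%:M ->
  e / 2 * \sum_(a < m) \sum_(j < t) (Q a j - U a j) ^+ 2 <= mxdot (Q - U) X.
Proof.
move=> [QQ Qmax] UU; have h := Qmax U UU.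
rewrite !mxdot_tr !mulmxDr !mxtraceD -!scalemxAr !mxtraceZ UU in h.
have nE : \sum_(a < m) \sum_(j < t) (Q a j - U a j) ^+ 2 = mxdot (Q - U) (Q - U).
  by apply: eq_bigr => a _; apply: eq_bigr => j _; rewrite !mxE expr2.
have tQU : \tr (Q^T *m U) = \tr (U^T *m Q).
  by rewrite -mxtrace_tr trmx_mul trmxK.
rewrite nE !mxdot_tr [(Q - U)^T]linearB /= !mulmxBl !mulmxBr !linearB /= QQ UU tQU.
rewrite tQU in h; lra.
Qed.
End Main4.

Section Main5.
Variables (R : realType) (k : nat) (n : 'I_k -> nat) (A : tensor R n).

Lemma polar_mode (eps : R) t (Unew Uold : factors R n t) (i : 'I_k) :
  (Uold i)^T *m Uold i = 1%:M ->
  (let X := Vmat A i Unew Uold *m Lam A i Unew Uold in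
    exists W : 'M[R]_(n i, t), Polar X W /\
      ((exists a : R, eigenvalue (W^T *m X) a /\ a < eps) ->
          Polar (X + eps *: Uold i) (Unew i)) /\
      (~ (exists a : R, eigenvalue (W^T *m X) a /\ a < eps) -> Unew i = W)) ->
  eps * \sum_a \sum_j (Unew i a j - Uold i a j) ^+ 2 <=
    \sum_j (contr A (mixn i.+1 Unew Uold j) ^+ 2 - contr A (mixn i Unew Uold j) ^+ 2).
Proof.
move=> UU /= [W [WP [hprox hnon]]].
set X := Vmat A i Unew Uold *m Lam A i Unew Uold in WP hprox hnon.
have key : eps / 2 * \sum_a \sum_j (Unew i a j - Uold i a j) ^+ 2 <= mxdot (Unew i - Uold i) X.
  have [ex|nex] := classic (exists a : R, eigenvalue (W^T *m X) a /\ a < eps).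
    exact: polar_prox (hprox ex) UU.
  rewrite (hnon nex); exact: polar_nonprox WP nex UU.
have step : 2 * mxdot (Unew i - Uold i) X <=
    \sum_j (contr A (mixn i.+1 Unew Uold j) ^+ 2 - contr A (mixn i Unew Uold j) ^+ 2).
  rewrite /mxdot exchange_big mulr_sumr /=; apply: ler_sum => j _.
  rewrite lam_new lam_old.
  set l1 := \sum_a Unew i a j * _; set l0 := \sum_a Uold i a j * _.
  have -> : \sum_a (Unew i - Uold i) a j * X a j = l0 * (l1 - l0).
    rewrite /l1 /l0 -sumrB mulr_sumr; apply: eq_bigr => a _.
    have VE : Vmat A i Unew Uold a j = contr_i A i (mix i Unew Uold j) a 0 by rewrite /Vmat [LHS]mxE.
    have LO : \sum_a0 Uold i a0 j * contr_i A i (mix i Unew Uold j) a0 0 = contr A (mix i Unew Uold j)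
      := esym (lam_old A i Unew Uold j).
    rewrite /X /Lam mul_mx_diag mxE (@mxE _ 1 t) VE [(Unew i - Uold i) a j]mxE /vv -!mixE LO mxE; ring.
  rewrite -subr_ge0; have -> : l1 ^+ 2 - l0 ^+ 2 - 2 * (l0 * (l1 - l0)) = (l1 - l0) ^+ 2 by ring.
  exact: sqr_ge0.
lra.
Qed.
End Main5.


Lemma ginc_inj t' t (g : 'I_t' -> 'I_t) : (forall a b : 'I_t', (a < b)%N = (g a < g b)%N) -> injective g.
Proof.
move=> ginc a b gab; apply: val_inj => /=.
have h1 := ginc a b. have h2 := ginc b a.
rewrite gab ltnn in h1 h2.
move: h1 h2; clear; lia.
Qed.

Lemma surj_inc_size t' t (g : 'I_t' -> 'I_t) :
  (forall a b : 'I_t', (a < b)%N = (g a < g b)%N) -> (forall j, exists j', g j' = j) -> t' = t.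
Proof.
move=> ginc gsurj; have ginj := ginc_inj ginc.
apply/eqP; rewrite eqn_leq; apply/andP; split.
  by have := leq_card g ginj; rewrite !card_ord.
have : (#|'I_t| <= #|codom g|)%N.
  apply: subset_leq_card; apply/subsetP => j _; have [j' <-] := gsurj j; exact: codom_f.
by rewrite (card_codom ginj) !card_ord.
Qed.

Lemma ginc_id t (g : 'I_t -> 'I_t) :
  (forall a b : 'I_t, (a < b)%N = (g a < g b)%N) -> forall j, g j = j.
Proof.
move=> ginc j; apply: val_inj => /=.
have ge : forall d (j : 'I_t), nat_of_ord j = d -> (d <= g j)%N.
  elim=> [|d IH] j' e //.
  have lt : (d < t)%N by rewrite -e ltnW.
  have h2 := IH (Ordinal lt) erefl.
  have h1 := ginc (Ordinal lt) j'; rewrite /= e ltnSn in h1.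
  have := esym h1; move: h2; clear; lia.
have le : forall d (j : 'I_t), (j + d < t)%N -> (g j + d < t)%N.
  elim=> [|d IH] j' e; first by rewrite addn0.
  have lt : (j'.+1 < t)%N by move: e; clear; lia.
  have h2 : (g (Ordinal lt) + d < t)%N by apply: IH => /=; move: e; clear; lia.
  have h1 := ginc j' (Ordinal lt); rewrite /= ltnSn in h1.
  have := esym h1; move: h2; clear; lia.
have h1 := ge j j erefl.
have h2 : (g j + (t - j.+1) < t)%N by apply: le; have := ltn_ord j; clear; lia.
have := ltn_ord j; move: h1 h2; clear; lia.
Qed.


Section Main6.
Variables (R : realType) (k : nat) (n : 'I_k -> nat) (A : tensor R n).

Definition Tm s t t' (g : 'I_t' -> 'I_t) (Unew Uold : factors R n t) : factors R n t' :=
  fun l => mxsub id g (if (l < s)%N then Unew l else Uold l).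

Lemma base_eq s t t' (g : 'I_t' -> 'I_t) (Uold Unew : factors R n t) (Unext : factors R n t') (i0 : 'I_k) :
  i0.+1 = s -> (forall l : 'I_k, (l < s)%N -> Unext l = Tm s g Unew Uold l) ->
  forall j, ((Unew i0)^T *m Vmat A i0 Unew Uold) (g j) (g j) = contr A (mixn s Unext (Tm s g Unew Uold) j).
Proof.
move=> ie hlt j.
have VE : forall a, Vmat A i0 Unew Uold a (g j) = vv A i0 Unew Uold (g j) a 0.
  by move=> a; rewrite /Vmat [LHS]mxE.
rewrite [LHS]mxE (eq_bigr (fun a => Unew i0 a (g j) * vv A i0 Unew Uold (g j) a 0)); last first.
  by move=> a _; rewrite VE [_^T _ _]mxE.
rewrite -lam_new ie; congr (contr A _).
apply: functional_extensionality_dep => l; rewrite /mixn.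
case: ifP => ls; first rewrite hlt //; rewrite /Tm ls;
  by apply/matrixP => a b; rewrite !mxE.
Qed.

Lemma mxsub_orth m t t' (g : 'I_t' -> 'I_t) (Q : 'M[R]_(m, t)) : injective g ->
  Q^T *m Q = 1%:M -> (mxsub id g Q)^T *m mxsub id g Q = 1%:M.
Proof.
move=> ginj QQ; apply/matrixP => a c.
have := congr1 (fun M : 'M[R]_t => M (g a) (g c)) QQ; rewrite /= !mxE (inj_eq ginj) => <-.
by apply: eq_bigr => r _; rewrite !mxE.
Qed.

Lemma polar_orth eps t (Unew Uold : factors R n t) (i : 'I_k) :
  (let X := Vmat A i Unew Uold *m Lam A i Unew Uold in
    exists W : 'M[R]_(n i, t), Polar X W /\
      ((exists a : R, eigenvalue (W^T *m X) a /\ a < eps) ->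
          Polar (X + eps *: Uold i) (Unew i)) /\
      (~ (exists a : R, eigenvalue (W^T *m X) a /\ a < eps) -> Unew i = W)) ->
  (Unew i)^T *m Unew i = 1%:M.
Proof.
move=> /= [W [WP [hp hn]]].
have [ex|nex] := classic (exists a : R, eigenvalue (W^T *m (Vmat A i Unew Uold *m Lam A i Unew Uold)) a /\ a < eps).
  exact: (hp ex).1.
by rewrite (hn nex); exact: WP.1.
Qed.

Lemma step_feasible b s eps kap t t' (Uold : factors R n t) (Unext : factors R n t') :
  (1 <= s <= k)%N -> 0 < kap -> feasible s Uold -> iapd_step b A s eps kap Uold Unext ->
  feasible s Unext.
Proof.
move=> /andP[s1 sk] kp [UoO UoB] [Unew [hpol [g [ginc [grange [_ [hlt hals]]]]]]].
have ginj := ginc_inj ginc.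
have i0lt : (s.-1 < k)%N by move: s1 sk; clear; lia.
pose i0 := Ordinal i0lt.
have ie : i0.+1 = s by rewrite /= prednK.
have hT : forall l : 'I_k, (s <= l)%N -> forall j, \sum_a Tm s g Unew Uold l a j ^+ 2 = 1.
  move=> l sl j; rewrite -(UoB l sl (g j)); apply: eq_bigr => a _.
  by rewrite /Tm ltnNge sl /= mxE.
have hbase : forall j, kap <= `|contr A (mixn s Unext (Tm s g Unew Uold) j)|.
  move=> j; rewrite -(base_eq ie hlt).
  have := (grange (g j)).1 (ex_intro _ j erefl).
  rewrite leNgt => nin; apply/negP => h; apply: nin => i ie'.
  have -> : i = i0 by apply: val_inj; rewrite /= -ie' .
  exact: h.
have chain := als_chain kp hT hals hbase.
split.
  move=> l ls; rewrite (hlt l ls) /Tm ls; apply: mxsub_orth => //.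
  exact: polar_orth (hpol l ls).
by move=> l ls j; case: (chain l ls j).
Qed.

End Main6.


Section Main7.
Variables (R : realType) (k : nat) (n : 'I_k -> nat) (A : tensor R n).

Lemma mixn_congrU t (i : nat) (U1 U2 V : factors R n t) j :
  (forall l : 'I_k, (l < i)%N -> U1 l = U2 l) -> mixn i U1 V j = mixn i U2 V j.
Proof.
move=> h; apply: functional_extensionality_dep => l; rewrite /mixn.
by case: ifP => // li; rewrite h.
Qed.

Lemma mixn_congrV t (i : nat) (U V1 V2 : factors R n t) j :
  (forall l : 'I_k, (i <= l)%N -> V1 l = V2 l) -> mixn i U V1 j = mixn i U V2 j.
Proof.
move=> h; apply: functional_extensionality_dep => l; rewrite /mixn.
by case: ifP => // /negbT; rewrite -leqNgt => li; rewrite h.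
Qed.

Lemma main_step s eps kap t t' (Uold : factors R n t) (Unext : factors R n t') :
  (1 <= s <= k)%N -> 0 < eps -> 0 < kap -> feasible s Uold ->
  iapd_step false A s eps kap Uold Unext ->
  exists e : t' = t,
    fobj A Unext - fobj A Uold >=
      Num.min eps (2 * kap ^+ 2) / 2 *
        frob2 (fun i : 'I_k => castmx (erefl (n i), e) (Unext i) - Uold i).
Proof.
move=> /andP[s1 sk] ep kp [UoO UoB] [Unew [hpol [g [ginc [grange [htr [hlt hals]]]]]]].
have ntr : forall j, ~ in_trunc A s kap Uold Unew j.
  by move=> j hj; have := (htr.2 (ex_intro _ j hj)).
have gsurj : forall j, exists j', g j' = j by move=> j; apply/(grange j).2.
have e := surj_inc_size ginc gsurj.
subst t'; exists erefl.
have gid := ginc_id ginc.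
have TmE : forall l, Tm s g Unew Uold l = if (l < s)%N then Unew l else Uold l.
  by move=> l; apply/matrixP => a b; rewrite /Tm !mxE gid.
have UnE : forall l : 'I_k, (l < s)%N -> Unext l = Unew l.
  by move=> l ls; rewrite (hlt l ls) -/(Tm s g Unew Uold l) TmE ls.
have i0lt : (s.-1 < k)%N by move: s1 sk; clear; lia.
pose i0 := Ordinal i0lt.
have ie : i0.+1 = s by rewrite /= prednK.
have hT : forall l : 'I_k, (s <= l)%N -> forall j, \sum_a Tm s g Unew Uold l a j ^+ 2 = 1.
  move=> l sl j; rewrite -(UoB l sl (g j)); apply: eq_bigr => a _.
  by rewrite /Tm ltnNge sl /= mxE.
have hbase : forall j, kap <= `|contr A (mixn s Unext (Tm s g Unew Uold) j)|.
  move=> j; rewrite -(base_eq A ie hlt).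
  have nin := ntr (g j).
  rewrite leNgt; apply/negP => h; apply: nin => i ie'.
  have -> : i = i0 by apply: val_inj; rewrite /= -ie' .
  exact: h.
have chain := als_chain kp hT hals hbase.
set c := Num.min eps (2 * kap ^+ 2) / 2.
have c0 : 0 <= c by rewrite /c divr_ge0 // le_min ltW //= mulr_ge0 // sqr_ge0.
have ce : c <= eps.
  rewrite /c; have : Num.min eps (2 * kap ^+ 2) <= eps by rewrite ge_min lexx.
  lra.
have ck : c <= kap ^+ 2.
  rewrite /c; have : Num.min eps (2 * kap ^+ 2) <= 2 * kap ^+ 2 by rewrite ge_min lexx orbT.
  lra.
rewrite telescope.
have -> : frob2 (fun i : 'I_k => castmx (erefl (n i), erefl t) (Unext i) - Uold i) =
    \sum_(i < k) \sum_a \sum_j (Unext i a j - Uold i a j) ^+ 2.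
  apply: eq_bigr => i _; apply: eq_bigr => a _; apply: eq_bigr => j _.
  by rewrite castmx_id !mxE.
rewrite mulr_sumr; apply: ler_sum => i _.
have N0 : 0 <= \sum_a \sum_j (Unext i a j - Uold i a j) ^+ 2.
  by apply: sumr_ge0 => a _; apply: sumr_ge0 => j _; exact: sqr_ge0.
case: (ltnP i s) => [ils|si].
  have h := polar_mode (UoO i ils) (hpol i ils).
  rewrite -(UnE i ils) in h.
  have m1 : forall j, mixn i.+1 Unew Uold j = mixn i.+1 Unext Uold j.
    by move=> j; apply: mixn_congrU => l li; rewrite UnE //; apply: leq_trans ils.
  have m0 : forall j, mixn i Unew Uold j = mixn i Unext Uold j.
    by move=> j; apply: mixn_congrU => l li; rewrite UnE //; apply: ltn_trans ils.
  rewrite (eq_bigr (fun j => contr A (mixn i.+1 Unew Uold j) ^+ 2 - contr A (mixn i Unew Uold j) ^+ 2)); last first.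
    by move=> j _; rewrite m1 m0.
  apply: le_trans h; exact: ler_wpM2r.
have m1 : forall j, mixn i.+1 Unext (Tm s g Unew Uold) j = mixn i.+1 Unext Uold j.
  move=> j; apply: mixn_congrV => l li; rewrite TmE ltnNge.
  by rewrite (leq_trans si (ltnW li)).
have m0 : forall j, mixn i Unext (Tm s g Unew Uold) j = mixn i Unext Uold j.
  move=> j; apply: mixn_congrV => l li; rewrite TmE ltnNge.
  by rewrite (leq_trans si li).
rewrite exchange_big mulr_sumr /=; apply: ler_sum => j _.
have [_ _ h3] := chain i si j.
rewrite m1 m0 TmE ltnNge si /= in h3.
apply: le_trans h3; apply: ler_wpM2r => //.
by apply: sumr_ge0 => a _; exact: sqr_ge0.
Qed.

End Main7.

Unset Implicit Arguments.

Theorem proposition5p4 (R : realType) (k : nat) (n : 'I_k -> nat) (s r : nat)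
    (A : tensor R n) (eps kappa : R)
    (t : nat -> nat) (U : forall q : nat, factors R n (t q)) (p : nat) :
  (3 <= k)%N -> (1 <= s <= k)%N ->
  (forall i : 'I_k, (i < s)%N -> (r <= n i)%N) ->
  (exists iota, A iota != 0) ->
  0 < eps ->
  t 0%N = r -> feasible s (U 0%N) -> 0 < fobj A (U 0%N) ->
  0 < kappa -> kappa < Num.sqrt (fobj A (U 0%N) / r%:R) ->
  (forall q : nat, exists b : bool, iapd_step b A s eps kappa (U q) (U q.+1)) ->
  iapd_step false A s eps kappa (U p) (U p.+1) ->
  exists e : t p.+1 = t p,
    fobj A (U p.+1) - fobj A (U p) >=
      Num.min eps (2 * kappa ^+ 2) / 2 *
        frob2 (fun i : 'I_k => castmx (erefl (n i), e) (U p.+1 i) - U p i).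
Proof.
move=> k3 s1k hr hA ep t0 feas0 f0 kp kf hstep hp.
have feas : forall q, feasible s (U q).
  elim => // q IH; have [b hb] := hstep q; exact: (step_feasible s1k kp IH hb).
exact: (main_step s1k ep kp (feas p) hp).
Qed.
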